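(* Let $\Omega=\{1,\dots,m\}^{\mathbb{N}}$, let $\mathcal{M}$ be the set of Borel probabilities on $\Omega$ with the Monge–Kantorovich metric $d_{MK}$, let $(\eta_j)_{j\in\mathbb{N}}$ be a sequence in $\mathcal{M}$, and let $R:\Omega\times\Omega\to\Omega$ be a continuous convolution kernel which is $s$-Lipschitz contractive in the second variable ($0\le s<1$ and $d_\Omega(R(x,y),R(x,y'))\le s\,d_\Omega(y,y')$ for all $x,y,y'$). Define $\phi_j:\mathcal{M}\to\mathcal{M}$ by $\phi_j(\mu)=\eta_j*\mu$, where $*$ is the convolution associated to $R$. Then the countable iterated function system $(\mathcal{M},\phi_j)_{j\in\mathbb{N}}$ is uniformly contractive with Lipschitz constant $s$, i.e. $d_{MK}(\phi_j(\mu),\phi_j(\mu'))\le s\,d_{MK}(\mu,\mu')$ for all $j$ and all $\mu,\mu'\in\mathcal{M}$.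
   Context: $d_\Omega(\alpha,\beta)=2^{-k}$ with $k=\min\{i:\alpha_i\neq\beta_i\}$ (and $0$ if $\alpha=\beta$); $d_{MK}(\mu,\nu)=\sup\{\int f\,d\mu-\int f\,d\nu : f \text{ 1-Lipschitz}\}$. The convolution associated to $R$ is $\int_\Omega f\,d(\nu*\mu)=\int\int f(R(x,y))\,d\nu(x)\,d\mu(y)$ for all continuous $f$. *)

(* Defs.v *)
From HB Require Import structures.
From mathcomp Require Import all_boot all_order all_algebra.
From mathcomp Require Import all_classical all_reals all_analysis.
Set Implicit Arguments. Unset Strict Implicit. Unset Printing Implicit Defensive.
Import Order.TTheory GRing.Theory Num.Theory.
Import numFieldNormedType.Exports.
Local Open Scope classical_set_scope.
Local Open Scope ring_scope.

(* The symbol space Omega = {1,...,m}^N, with m = n.+1 (alphabet 'I_n.+1). *)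
Definition Sym (n : nat) := 'I_n.+1.
HB.instance Definition _ (n : nat) := Finite.on (Sym n).
HB.instance Definition _ (n : nat) := isPointed.Build (Sym n) ord0.
Definition Omega (n : nat) := nat -> Sym n.
HB.instance Definition _ (n : nat) := Pointed.on (Omega n).

Definition dOmega (R : realType) (n : nat) (a b : Omega n) : R :=
  match pselect (exists i, a i != b i) with
  | left H => (2 ^-1) ^+ (ex_minn H)
  | right _ => 0
  end.

Definition dOpen (R : realType) (n : nat) : set (set (Omega n)) :=
  [set U : set (Omega n) | forall x : Omega n, U x -> exists2 e : R, 0 < e &
           forall y : Omega n, dOmega R x y < e -> U y].

Definition OmegaB (R : realType) (n : nat) := g_sigma_algebraType (@dOpen R n).

Definition lip1 (R : realType) (n : nat) (f : Omega n -> R) : Prop :=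
  forall x y, `|f x - f y| <= dOmega R x y.

Definition dcontinuous (R : realType) (n : nat) (f : Omega n -> R) : Prop :=
  forall x (e : R), 0 < e -> exists2 d : R, 0 < d &
    forall y, dOmega R x y < d -> `|f x - f y| < e.

Definition dcontinuous2 (R : realType) (n : nat)
    (K : Omega n -> Omega n -> Omega n) : Prop :=
  forall x y (e : R), 0 < e -> exists2 d : R, 0 < d &
    forall x' y', dOmega R x x' < d -> dOmega R y y' < d ->
      dOmega R (K x y) (K x' y') < e.

Definition dMK (R : realType) (n : nat)
    (mu nu : probability (OmegaB R n) R) : R :=
  sup [set (\int[mu]_(x in setT) f x - \int[nu]_(x in setT) f x)%R
      | f in [set f : Omega n -> R | lip1 f]].

(* rho = nu * mu is the convolution associated to K:
   int f d rho = int int f(K(x,y)) dnu(x) dmu(y) for all continuous f. *)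
Definition is_convolution (R : realType) (n : nat)
    (K : Omega n -> Omega n -> Omega n)
    (nu mu rho : probability (OmegaB R n) R) : Prop :=
  forall f : Omega n -> R, dcontinuous f ->
    (\int[rho]_x (f x)%:E =
     \int[mu]_y (\int[nu]_x (f (K x y))%:E))%E.

(* Main.v *)
Require Import Defs.
From HB Require Import structures.
From mathcomp Require Import all_boot all_order all_algebra.
From mathcomp Require Import all_classical all_reals all_analysis.
From mathcomp Require Import lra.
Import Order.TTheory GRing.Theory Num.Theory.
Import numFieldNormedType.Exports.
Local Open Scope classical_set_scope.
Local Open Scope ring_scope.

Section helpers.
Variables (R : realType) (n : nat).

Lemma dOmega_ge0 (a b : Omega n) : 0 <= dOmega R a b.
Proof. rewrite /dOmega; case: pselect => // H; exact: exprn_ge0. Qed.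

Lemma dOmega_le1 (a b : Omega n) : dOmega R a b <= 1.
Proof.
rewrite /dOmega; case: pselect => // H; apply: exprn_ile1 => //.
by rewrite invf_le1 // ler1n.
Qed.

Lemma dOmega_xx (a : Omega n) : dOmega R a a = 0.
Proof.
rewrite /dOmega; case: pselect => // -[i] Hi; exfalso; move: Hi; by rewrite eqxx.
Qed.

Lemma dcont_meas (f : Omega n -> R) : dcontinuous f ->
  measurable_fun [set: OmegaB R n] f.
Proof.
move=> cf; apply: (measurability _ (measurable_realfun.RGenOInfty.measurableE R)).
move=> /= _ [_ [x ->] <-]; rewrite setTI.
apply: sub_sigma_algebra => y /=; rewrite in_itv /= andbT => xy.
have [d d0 Hd] := cf y (f y - x) ltac:(by rewrite subr_gt0).
exists d => // z /Hd; rewrite in_itv /= andbT => H.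
have := ler_norm (f y - f z); lra.
Qed.

Lemma dOmegaC (a b : Omega n) : dOmega R a b = dOmega R b a.
Proof.
rewrite /dOmega; case: pselect => H1; case: pselect => H2.
- congr (_ ^+ _); apply/eqP; rewrite eqn_leq.
  case: ex_minnP => m Hm minm; case: ex_minnP => m' Hm' minm'.
  by rewrite minm ?minm' // eq_sym.
- by exfalso; apply: H2; case: H1 => i Hi; exists i; rewrite eq_sym.
- by exfalso; apply: H1; case: H2 => i Hi; exists i; rewrite eq_sym.
- by [].
Qed.

Lemma lip_dcont (c : R) (f : Omega n -> R) : 0 <= c ->
  (forall x y, `|f x - f y| <= c * dOmega R x y) -> dcontinuous f.
Proof.
move=> c0 Hf x e e0; exists (e / (c + 1)).
  by apply: divr_gt0 => //; lra.
move=> y dxy; apply: (le_lt_trans (Hf x y)).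
apply: (le_lt_trans (y := c * (e / (c + 1)))).
  by apply: ler_wpM2l => //; exact: ltW.
rewrite mulrA ltr_pdivrMr; last by lra.
by rewrite mulrDr mulr1 mulrC ltrDl.
Qed.

Lemma bnd_integrable (mu : probability (OmegaB R n) R) (h : Omega n -> R) :
  measurable_fun [set: OmegaB R n] h -> (exists M, forall x, `|h x| <= M) ->
  mu.-integrable [set: OmegaB R n] (EFin \o h).
Proof.
move=> mh [M HM]; apply: measurable_bounded_integrable => //.
  by have := probability_setT mu; rewrite /= => ->; rewrite ltry.
rewrite /bounded_near; near=> M0; rewrite /globally /= => x _.
apply: le_trans (HM x) _; near: M0; exact: nbhs_pinfty_ge (num_real M).
Unshelve. all: end_near. Qed.

Lemma lip_bnd (c : R) (f : Omega n -> R) : 0 <= c ->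
  (forall x y, `|f x - f y| <= c * dOmega R x y) ->
  exists M, forall x, `|f x| <= M.
Proof.
move=> c0 Hf; exists (`|f point| + c) => x.
have := Hf x point; have := dOmega_le1 x point; have := dOmega_ge0 x point.
have := ler_normD (f x - f point) (f point).
rewrite subrK => H1 H2 H3 H4.
have : c * dOmega R x point <= c by rewrite -[leRHS]mulr1 ler_wpM2l.
lra.
Qed.

Lemma lip_integrable (mu : probability (OmegaB R n) R) (c : R) (f : Omega n -> R) : 0 <= c ->
  (forall x y, `|f x - f y| <= c * dOmega R x y) ->
  mu.-integrable [set: OmegaB R n] (EFin \o f).
Proof.
move=> c0 Hf; apply: bnd_integrable; last exact: (@lip_bnd c f c0 Hf).
apply: dcont_meas; exact: (@lip_dcont c f c0 Hf).
Qed.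

Lemma Rint_cst (mu : probability (OmegaB R n) R) (r : R) :
  \int[mu]_(x in [set: OmegaB R n]) r = r.
Proof. by rewrite Rintegral_cst //; have := probability_setT mu; rewrite /= => ->; rewrite /= mulr1. Qed.


Lemma lip1_c (f : Omega n -> R) : lip1 f ->
  forall x y, `|f x - f y| <= 1 * dOmega R x y.
Proof. by move=> lf x y; rewrite mul1r. Qed.

Lemma cst_lip (r : R) : forall x y : Omega n,
  `|(fun _ : Omega n => r) x - (fun _ => r) y| <= 0 * dOmega R x y.
Proof. by move=> x y; rewrite subrr normr0 mul0r. Qed.

Lemma dMK_nonempty (mu nu : probability (OmegaB R n) R) :
  [set (\int[mu]_(x in setT) f x - \int[nu]_(x in setT) f x)%R
      | f in [set f : Omega n -> R | lip1 f]] !=set0.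
Proof.
exists ((\int[mu]_(x in setT) (fun _ => (0:R)) x - \int[nu]_(x in setT) (fun _ => (0:R)) x)%R).
exists (fun _ => 0) => //= x y; rewrite subrr normr0; exact: dOmega_ge0.
Qed.

Lemma dMK_has_sup (mu nu : probability (OmegaB R n) R) :
  has_sup [set (\int[mu]_(x in setT) f x - \int[nu]_(x in setT) f x)%R
      | f in [set f : Omega n -> R | lip1 f]].
Proof.
split; first exact: dMK_nonempty.
exists 2 => _ [f lf <-].
have fi := fun P => @lip_integrable P 1 f ler01 (@lip1_c f lf).
have H1 : \int[mu]_(x in setT) f x <= f point + 1.
  rewrite -[leRHS](Rint_cst mu); apply: le_Rintegral => //.
    exact: fi.
    exact: (@lip_integrable mu 0 _ (lexx 0) (cst_lip _)).
  move=> x _; have := lf x point; have := dOmega_le1 x point.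
  have := ler_norm (f x - f point); lra.
have H2 : f point - 1 <= \int[nu]_(x in setT) f x.
  rewrite -[leLHS](Rint_cst nu); apply: le_Rintegral => //.
    exact: (@lip_integrable nu 0 _ (lexx 0) (cst_lip _)).
    exact: fi.
  move=> x _; have := lf point x; have := dOmega_le1 point x.
  have := ler_norm (f point - f x); lra.
lra.
Qed.

Lemma key (mu mu' : probability (OmegaB R n) R) (s : R) (g : Omega n -> R) :
  0 <= s -> (forall y y', `|g y - g y'| <= s * dOmega R y y') ->
  \int[mu]_(x in setT) g x - \int[mu']_(x in setT) g x <= s * dMK mu mu'.
Proof.
move=> s0 Hg; have [s0'|sp] := eqVneq s 0.
  have gc : forall y, g y = g point.
    move=> y; apply/eqP; rewrite -subr_eq0 -normr_le0.
    by have := Hg y point; rewrite s0' mul0r.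
  have E : forall P : probability (OmegaB R n) R,
    \int[P]_(x in setT) g x = \int[P]_(x in setT) (fun _ => g point) x.
    by move=> P; apply: eq_Rintegral => y _; exact: gc.
  rewrite !E.
  by rewrite !Rint_cst subrr s0' mul0r.
have sp' : 0 < s by rewrite lt_neqAle eq_sym sp s0.
have lh : lip1 (fun y => s^-1 * g y).
  move=> x y; rewrite -mulrBr normrM gtr0_norm ?invr_gt0 //.
  rewrite ler_pdivrMl //; exact: Hg.
have := sup_upper_bound (dMK_has_sup mu mu') (ex_intro2 _ _ _ lh erefl).
rewrite /= !RintegralZl //.
rewrite -/(dMK mu mu') -mulrBr => H.
have -> : \int[mu]_(x in setT) g x - \int[mu']_(x in setT) g x =
  s * (s^-1 * (\int[mu]_(x in setT) g x - \int[mu']_(x in setT) g x)).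
  by rewrite mulrA mulfV // mul1r.
  by apply: ler_wpM2l.
all: exact: (@lip_integrable _ s g s0 Hg).
Qed.

End helpers.

Theorem corollary3p2 (R : realType) (n : nat)
  (eta : nat -> probability (OmegaB R n) R)
  (K : Omega n -> Omega n -> Omega n) (s : R)
  (phi : nat -> probability (OmegaB R n) R -> probability (OmegaB R n) R) :
  dcontinuous2 R K ->
  0 <= s -> s < 1 ->
  (forall x y y', dOmega R (K x y) (K x y') <= s * dOmega R y y') ->
  (forall j mu, is_convolution K (eta j) mu (phi j mu)) ->
  forall j (mu mu' : probability (OmegaB R n) R),
    dMK (phi j mu) (phi j mu') <= s * dMK mu mu'.
Proof.
move=> HK s0 s1 Hs Hc j mu mu'.
apply: ge_sup; first exact: dMK_nonempty.
move=> _ [f lf <-].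
have [M HM] := @lip_bnd R n 1 f ler01 (@lip1_c R n f lf).
pose g y := \int[eta j]_(x in setT) f (K x y).
have mK : forall y, measurable_fun [set: OmegaB R n] (fun x => f (K x y)).
  move=> y; apply: dcont_meas => x e e0.
  have [d d0 Hd] := HK x y e e0.
  exists d => // x' dx; apply: le_lt_trans (lf _ _) _.
  by apply: Hd => //; rewrite dOmega_xx.
have gint : forall y, (eta j).-integrable [set: OmegaB R n] (EFin \o (fun x => f (K x y))).
  by move=> y; apply: bnd_integrable => //; exists M => x.
have g1 : forall y y', g y - g y' <= s * dOmega R y y'.
  move=> y y'; rewrite /g -RintegralB //.
  rewrite -[leRHS](@Rint_cst R n (eta j)); apply: le_Rintegral => //.
  - apply: bnd_integrable.
      exact: measurable_realfun.measurable_funB.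
    exists (M + M) => x; apply: le_trans (ler_normB _ _) _.
    by apply: lerD.
  - exact: (@lip_integrable R n _ 0 _ (lexx 0) (@cst_lip R n _)).
  - move=> x _; apply: le_trans (ler_norm _) _.
    by apply: le_trans (lf _ _) _.
have glip : forall y y', `|g y - g y'| <= s * dOmega R y y'.
  move=> y y'; rewrite ler_norml g1 andbT lerNl opprB dOmegaC; exact: g1.
have conv : forall P, \int[phi j P]_(x in setT) f x = \int[P]_(x in setT) g x.
  move=> P; rewrite /Rintegral (Hc j P f (@lip_dcont R n 1 f ler01 (@lip1_c R n f lf))).
  congr fine; apply: eq_integral => y _.
  by rewrite fineK //; exact: integrable_fin_num (gint y).
rewrite !conv; exact: key.
Qed.
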